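(* Let $f\colon Y\to X$ be a homeomorphism which is a cellular refinement of CW-complexes, and let $\mathcal{F}$ be a cellular cosheaf on $X$. Then $|f^*\mathcal{F}|\cong|\mathcal{F}|$.
   Context: For a CW-complex $X$ with set of cells $I$, $I$ is a poset generated by $i<j$ whenever the interior of cell $i$ meets the boundary of cell $j$; $d(i)$ is the dimension of cell $i$, so $X=(\coprod_{i\in I}D^{d(i)})/\sim$. A cellular cosheaf on $X$ is a contravariant functor $\mathcal{F}\colon I\to\mathrm{Top}$. Its realization is $|\mathcal{F}|=(\coprod_{i\in I}\mathcal{F}(i)\times D^{d(i)})/\sim$, where $(a_1,x_1)\sim(a_2,x_2)$ for $x_1\in D^{d(i)}$, $x_2\in\partial D^{d(j)}$, $i<j$, $x_1$ and $x_2$ identified in $X$, and $a_2\mapsto a_1$ under $\mathcal{F}(j)\to\mathcal{F}(i)$. A cellular refinement is a homeomorphism $f\colon Y\to X$ such that every open cell of $Y$ maps into the interior of a cell of $X$, giving a poset map $f_*\colon J\to I$ on cell posets; $f^*\mathcal{F}=\mathcal{F}\circ f_*$. *)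

(* Defs.v *)
From HB Require Import structures.
From mathcomp Require Import all_boot all_order all_algebra.
From mathcomp Require Import all_classical all_reals all_analysis.
From Stdlib Require Import Relation_Operators List.

Set Implicit Arguments.
Unset Strict Implicit.
Unset Printing Implicit Defensive.

Import Order.TTheory GRing.Theory Num.Theory.
Import numFieldNormedType.Exports.
Local Open Scope classical_set_scope.
Local Open Scope ring_scope.

Definition sqnorm (R : realType) (n : nat) (v : 'rV[R]_n) : R :=
  \sum_(k < n) (v ord0 k) ^+ 2.

Definition disk (R : realType) (n : nat) : set 'rV[R]_n :=
  [set v | sqnorm v <= 1].
Definition odisk (R : realType) (n : nat) : set 'rV[R]_n :=
  [set v | sqnorm v < 1].
Definition sphere (R : realType) (n : nat) : set 'rV[R]_n :=
  [set v | sqnorm v = 1].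
Arguments disk R n : clear implicits.
Arguments odisk R n : clear implicits.
Arguments sphere R n : clear implicits.

Unset Implicit Arguments.
Record cw_structure (R : realType) (X : topologicalType) (I : Type) := CW {
  cw_dim : I -> nat;
  cw_char : forall i, 'rV[R]_(cw_dim i) -> X;
  cw_char_cont : forall i, {within disk R (cw_dim i), continuous (cw_char i)};
  cw_char_inj : forall i (u v : 'rV[R]_(cw_dim i)),
      odisk R _ u -> odisk R _ v -> cw_char i u = cw_char i v -> u = v;
  cw_cover : forall x : X, exists i, (cw_char i @` odisk R _) x;
  cw_disjoint : forall i j (x : X),
      (cw_char i @` odisk R _) x -> (cw_char j @` odisk R _) x -> i = j;
  cw_closure_finite : forall i, exists s : list I,
      (forall j, List.In j s -> (cw_dim j < cw_dim i)%N) /\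
      (cw_char i @` sphere R _ `<=` [set x | exists2 j, List.In j s &
                                              (cw_char j @` odisk R _) x]);
  cw_weak : forall A : set X,
      closed A <-> (forall i, closed (disk R _ `&` cw_char i @^-1` A));
  cw_hausdorff : hausdorff_space X
}.
Set Implicit Arguments.
Arguments cw_dim {R X I} c i.
Arguments cw_char {R X I} c i _.

Section CellPoset.
Context (R : realType) (X : topologicalType) (I : Type) (C : cw_structure R X I).

Definition ocell (i : I) : set X := cw_char C i @` odisk R (cw_dim C i).
Definition bcell (i : I) : set X := cw_char C i @` sphere R (cw_dim C i).

Definition cw_gen (i j : I) : Prop := exists x, ocell i x /\ bcell j x.
Definition cw_lt : I -> I -> Prop := clos_trans I cw_gen.
Definition cw_le : I -> I -> Prop := clos_refl_trans I cw_gen.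
End CellPoset.

(* Cellular cosheaves: contravariant functors from the cell poset to   *)
Record cosheaf (R : realType) (X : topologicalType) (I : Type)
    (C : cw_structure R X I) := Cosheaf {
  cs_sp : I -> topologicalType;
  cs_res : forall i j, cw_le C i j -> cs_sp j -> cs_sp i;
  cs_res_cont : forall i j (p : cw_le C i j), continuous (cs_res p);
  cs_res_id : forall i (p : cw_le C i i) a, cs_res p a = a;
  cs_res_comp : forall i j k (p : cw_le C i k) (q : cw_le C i j)
      (r : cw_le C j k) a, cs_res p a = cs_res q (cs_res r a)
}.

Record space := Space { sp_car : Type; sp_open : set (set sp_car) }.
Arguments sp_open : clear implicits.

Definition homeomorphic (A B : space) : Prop :=
  exists (g : sp_car A -> sp_car B) (h : sp_car B -> sp_car A),
    cancel g h /\ cancel h g /\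
    (forall U, sp_open B U -> sp_open A (g @^-1` U)) /\
    (forall U, sp_open A U -> sp_open B (h @^-1` U)).

(* Realization  |G| = (coprod_i G(i) x D^{d(i)}) / ~ , for a family of  *)
(* spaces G over the cells and a relation  rel i j a2 a1  meaning       *)
(* "a2 |-> a1 under G(j) -> G(i)".  Topology: quotient of the disjoint *)
(* union of the (subspace-of-product) topologies on G(i) x D^{d(i)}.    *)
Section Realization.
Context (R : realType) (X : topologicalType) (I : Type) (C : cw_structure R X I).
Context (G : I -> topologicalType)
        (rel : forall i j : I, G j -> G i -> Prop).

Definition rpt := {i : I & (G i * 'rV[R]_(cw_dim C i))%type}.

Definition rvalid (p : rpt) : Prop := disk R _ (projT2 p).2.

Definition rgen (p q : rpt) : Prop :=
  cw_lt C (projT1 p) (projT1 q) /\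
  disk R _ (projT2 p).2 /\ sphere R _ (projT2 q).2 /\
  cw_char C _ (projT2 p).2 = cw_char C _ (projT2 q).2 /\
  @rel (projT1 p) (projT1 q) (projT2 q).1 (projT2 p).1.

Definition requiv (p q : rpt) : Prop :=
  rvalid p /\ rvalid q /\ clos_refl_sym_trans rpt rgen p q.

Definition rcarrier := {A : set rpt | exists p, rvalid p /\ A = requiv p}.

Definition open_in_piece (i : I) (S : set (G i * 'rV[R]_(cw_dim C i))%type) :=
  exists O : set (G i * 'rV[R]_(cw_dim C i))%type,
    open O /\ S = O `&` [set ax | disk R _ ax.2].

Definition ropen (U : set rcarrier) : Prop :=
  forall i, open_in_piece
    [set ax | disk R _ ax.2 /\
              exists A : rcarrier, U A /\ sval A (existT _ i ax)].

Definition realization : space := Space ropen.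
End Realization.

Definition cosheaf_rel (R : realType) (X : topologicalType) (I : Type)
    (C : cw_structure R X I) (F : cosheaf C) (i j : I)
    (a2 : cs_sp F j) (a1 : cs_sp F i) : Prop :=
  exists p : cw_le C i j, a1 = cs_res p a2.

Definition cosheaf_realization (R : realType) (X : topologicalType) (I : Type)
    (C : cw_structure R X I) (F : cosheaf C) : space :=
  realization C (@cosheaf_rel R X I C F).

Definition homeomorphism (Y X : topologicalType) (f : Y -> X) : Prop :=
  exists g : X -> Y, cancel f g /\ cancel g f /\ continuous f /\ continuous g.

Definition cellular_refinement (R : realType) (X Y : topologicalType)
    (I J : Type) (CX : cw_structure R X I) (CY : cw_structure R Y J)
    (f : Y -> X) (fs : J -> I) : Prop :=
  homeomorphism f /\ forall j, f @` ocell CY j `<=` ocell CX (fs j).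

Definition pullback_rel (R : realType) (X : topologicalType) (I J : Type)
    (C : cw_structure R X I) (F : cosheaf C) (fs : J -> I) (j j' : J)
    (a2 : cs_sp F (fs j')) (a1 : cs_sp F (fs j)) : Prop :=
  exists p : cw_le C (fs j) (fs j'), a1 = cs_res p a2.

Definition pullback_realization (R : realType) (X Y : topologicalType)
    (I J : Type) (CX : cw_structure R X I) (CY : cw_structure R Y J)
    (F : cosheaf CX) (fs : J -> I) : space :=
  realization CY (G := fun j => cs_sp F (fs j)) (@pullback_rel R X I J CX F fs).

(* Main.v *)
Require Import Defs.
From mathcomp Require Import all_boot all_order all_algebra.
From mathcomp Require Import all_classical all_reals all_analysis.
Import Order.TTheory GRing.Theory Num.Theory.
Import numFieldNormedType.Exports.
Local Open Scope classical_set_scope.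
Local Open Scope ring_scope.

Set Warnings "-notation-overridden,-ambiguous-paths,-notation-incompatible-prefix,-deprecated".
From mathcomp Require Import all_boot all_order all_algebra.
From mathcomp Require Import all_classical all_reals all_analysis.
From mathcomp Require Import lra.
Import Order.TTheory GRing.Theory Num.Theory.
Import numFieldNormedType.Exports.
Local Open Scope classical_set_scope.
Local Open Scope ring_scope.
Set Implicit Arguments.
Unset Strict Implicit.
Unset Printing Implicit Defensive.

Section Disk.
Variable R : realType.

Lemma sqnorm_seq_cont n (s : seq 'I_n) :
  continuous (fun v : 'rV[R]_n => \sum_(k <- s) (v ord0 k) ^+ 2).
Proof.
elim: s => [|k s IH].
  under eq_fun do rewrite big_nil; exact: cst_continuous.
under eq_fun do rewrite big_cons.
move=> v; apply: (@continuousD R R^o _ (fun v : 'rV[R]_n => v ord0 k ^+ 2)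
   (fun v => \sum_(k <- s) v ord0 k ^+ 2)); last exact: IH.
exact: (@continuousM R _ (fun v : 'rV[R]_n => v ord0 k) (fun v => v ord0 k) v
   (@coord_continuous R 1 n ord0 k v) (@coord_continuous R 1 n ord0 k v)).
Qed.

Lemma sqnorm_cont n : continuous (@sqnorm R n).
Proof. exact: sqnorm_seq_cont. Qed.

Lemma disk_closed n : closed (disk R n).
Proof.
have := proj1 (continuous_closedP _) (@sqnorm_cont n) [set x : R | x <= 1].
by apply; exact: closed_le.
Qed.

Lemma sqnorm_ge0 n (v : 'rV[R]_n) : 0 <= sqnorm v.
Proof. by apply: sumr_ge0 => k _; rewrite sqr_ge0. Qed.

Lemma coord_le_sqnorm n (v : 'rV[R]_n) k : (v ord0 k) ^+ 2 <= sqnorm v.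
Proof.
rewrite /sqnorm (bigD1 k) //= lerDl; apply: sumr_ge0 => i _; exact: sqr_ge0.
Qed.

Lemma disk_compact n : compact (disk R n).
Proof.
apply: (@subclosed_compact _ _ [set v : 'rV[R]_n | forall i, `[(-1:R), 1]%classic (v ord0 i)]
  (@disk_closed n)).
  exact: (@rV_compact R n (fun=> `[(-1:R), 1]%classic) (fun=> @segment_compact R (-1) 1)).
move=> v dv i /=; rewrite in_itv /=.
have := coord_le_sqnorm v i; rewrite /disk /= in dv.
move: (v ord0 i) => x h; apply/andP; split; nra.
Qed.

Lemma odisk_disk n : odisk R n `<=` disk R n.
Proof. by move=> v; rewrite /odisk /disk /= => /ltW. Qed.

Lemma sphere_disk n : sphere R n `<=` disk R n.
Proof. by move=> v; rewrite /sphere /disk /= => ->. Qed.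

Lemma disk_cases n v : disk R n v -> odisk R n v \/ sphere R n v.
Proof.
rewrite /disk /odisk /sphere /= le_eqVlt => /orP[/eqP->|->]; by [right|left].
Qed.

Lemma odisk_sphere n v : odisk R n v -> sphere R n v -> False.
Proof. by rewrite /odisk /sphere /= => + E; rewrite E ltxx. Qed.

Lemma sqnormZ n t (v : 'rV[R]_n) : sqnorm (t *: v) = t ^+ 2 * sqnorm v.
Proof.
rewrite /sqnorm mulr_sumr; apply: eq_bigr => k _; by rewrite mxE exprMn.
Qed.

Lemma disk_near n (y : 'rV[R]_n) (N : set 'rV[R]_n) :
  disk R n y -> nbhs y N -> exists w, odisk R n w /\ N w.
Proof.
move=> /disk_cases [oy|sy] Ny; first by exists y; split => //; exact: nbhs_singleton.
move/nbhs_ballP: Ny => [e e0 sub].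
pose d := Num.min 1 (e / (2 * (`|y| + 1))).
have d0 : 0 < d.
  have ny := normr_ge0 y.
  rewrite lt_min ltr01 /=; apply: divr_gt0 => //; apply: mulr_gt0 => //; lra.
have d1 : d <= 1 by rewrite ge_min lexx.
have de : d <= e / (2 * (`|y| + 1)) by rewrite ge_min lexx orbT.
exists ((1 - d) *: y); split.
  rewrite /odisk /= sqnormZ sy mulr1.
  have h0 : 0 <= 1 - d by rewrite subr_ge0.
  have h1 : 1 - d < 1 by rewrite ltrBlDr ltrDl.
  nra.
apply: sub; rewrite mx_norm_ball /ball_ /=.
have -> : y - (1 - d) *: y = d *: y by rewrite scalerBl scale1r opprB addrC subrK.
rewrite normrZ (gtr0_norm d0).
have ny : 0 <= `|y| by [].
have hy : 0 < 2 * (`|y| + 1) by lra.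
have : d * (2 * (`|y| + 1)) <= e by rewrite -ler_pdivlMr.
nra.
Qed.

End Disk.

Section TopLemmas.

Lemma closed_pre_within (T U : topologicalType) (D : set T) (g : T -> U) (B : set U) :
  closed D -> {within D, continuous g} -> closed B -> closed (D `&` g @^-1` B).
Proof.
move=> cD cg cB.
have := proj1 (continuous_closedP _) cg B cB.
move=> /closed_subspaceP [V cV e].
have -> : D `&` g @^-1` B = V `&` D.
  by rewrite e setIC.
exact: closedI.
Qed.

Lemma tube_closed (A B : topologicalType) (K : set B) (C : set (A * B)) :
  compact K -> closed C -> (forall ab, C ab -> K ab.2) -> closed (fst @` C).
Proof.
move=> cK cC CK.
rewrite -[fst @` C]setCK; apply: open_closedC; rewrite openE => a /= Na.
have oC : open (~` C) by rewrite openC.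
have H : \forall i \near a, K `<=` (fun x => ~ C (i, x)).
  apply: (proj1 (compact_near_coveringP K) cK) => b Kb.
  have nC : ~ C (a, b) by move=> Cab; apply: Na; exists (a, b).
  have : nbhs (a, b) (~` C) by apply: open_nbhs_nbhs; split.
  case=> [[P1 P2]] /= [nP1 nP2] sub.
  exists (P2, P1) => //= -[x i] /= [P2x P1i]; exact: (sub (i, x)).
rewrite /interior; apply: (filterS _ H) => i Ui [[i' x]] Cix /= ei.
by subst i'; apply: (Ui x (CK _ Cix)).
Qed.

Lemma closed_eq_within (T1 T2 Z : topologicalType) (D1 : set T1) (D2 : set T2)
    (g1 : T1 -> Z) (g2 : T2 -> Z) :
  hausdorff_space Z -> closed D1 -> closed D2 ->
  {within D1, continuous g1} -> {within D2, continuous g2} ->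
  closed [set p | D1 p.1 /\ D2 p.2 /\ g1 p.1 = g2 p.2].
Proof.
move=> hZ cD1 cD2 c1 c2.
set E := [set p | _].
rewrite -[E]setCK; apply: open_closedC; rewrite openE => -[y z] /= NE.
have oD1 : open (~` D1) by rewrite openC.
have oD2 : open (~` D2) by rewrite openC.
have [Dy|nDy] := pselect (D1 y); last first.
  exists ((~` D1), setT) => /=; first by split; [apply: open_nbhs_nbhs; split | exact: filterT].
  by move=> [t1 t2] /= [nD _] [].
have [Dz|nDz] := pselect (D2 z); last first.
  exists (setT, (~` D2)) => /=; first by split; [exact: filterT | apply: open_nbhs_nbhs; split].
  by move=> [t1 t2] /= [_ nD] [_ []].
have ne : g1 y != g2 z by apply/eqP => e; apply: NE.
move: hZ; rewrite open_hausdorff => hZ.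
have := hZ _ _ ne; case=> -[U1 U2] /= [].
rewrite !inE => U1y U2z [oU1 oU2 /eqP U0].
have := (proj1 (subspace_continuousP _ _) c1) y Dy U1.
move=> /(_ (open_nbhs_nbhs (conj oU1 U1y))) W1.
have := (proj1 (subspace_continuousP _ _) c2) z Dz U2.
move=> /(_ (open_nbhs_nbhs (conj oU2 U2z))) W2.
exists ([set t | D1 t -> U1 (g1 t)], [set t | D2 t -> U2 (g2 t)]) => /=.
  by split; [exact: W1 | exact: W2].
move=> [t1 t2] /= [h1 h2] [d1 [d2 e]].
have : (U1 `&` U2) (g1 t1) by split; [exact: h1 | rewrite e; exact: h2].
by move/eqP: U0 => ->.
Qed.

End TopLemmas.

Section ProdCont.
Lemma fst_cont (A B : topologicalType) : continuous (@fst A B).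
Proof.
move=> [a b] P /= nP; exists (P, setT) => /=; first by split => //; exact: filterT.
by move=> [x y] /= [].
Qed.

Lemma snd_cont (A B : topologicalType) : continuous (@snd A B).
Proof.
move=> [a b] P /= nP; exists (setT, P) => /=; first by split => //; exact: filterT.
by move=> [x y] /= [].
Qed.

Lemma pair_cont (T A B : topologicalType) (f : T -> A) (g : T -> B) :
  continuous f -> continuous g -> continuous (fun x => (f x, g x)).
Proof. by move=> cf cg x; apply: cvg_pair; [exact: cf | exact: cg]. Qed.

Lemma closed_foldU (T : topologicalType) (J : Type) (B : J -> set T) (L : list J) :
  (forall j, closed (B j)) ->
  closed (foldr (fun j acc => B j `|` acc) set0 L).
Proof.
move=> cB; elim: L => [|j L IH] /=; first exact: closed0.
exact: closedU.
Qed.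

Lemma in_foldU (T : Type) (J : Type) (B : J -> set T) (L : list J) j x :
  List.In j L -> B j x -> foldr (fun j acc => B j `|` acc) set0 L x.
Proof.
elim: L => [//|j' L IH] /= [->|h] Bx; [by left | right; exact: IH].
Qed.

Lemma foldU_in (T : Type) (J : Type) (B : J -> set T) (L : list J) x :
  foldr (fun j acc => B j `|` acc) set0 L x -> exists2 j, List.In j L & B j x.
Proof.
elim: L => [//|j L IH] /= [h|/IH [j' h1 h2]]; first by exists j; [left|].
by exists j'; [right|].
Qed.
Lemma cont12 (A B C : topologicalType) : continuous (fun t : (A * B) * C => t.1.2).
Proof. move=> t; exact: (continuous_comp (@fst_cont (A * B)%type C t) (@snd_cont A B t.1)). Qed.

Lemma cont11 (A B C D : topologicalType) (g : A -> D) : continuous g ->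
  continuous (fun t : (A * B) * C => g t.1.1).
Proof.
move=> cg t; exact: (continuous_comp (continuous_comp (@fst_cont (A * B)%type C t)
  (@fst_cont A B t.1)) (cg t.1.1)).
Qed.
End ProdCont.

From mathcomp Require Import lra.
From Stdlib Require Import Relation_Operators List.
Set Implicit Arguments.
Unset Strict Implicit.
Unset Printing Implicit Defensive.

Section Cells.
Context (R : realType) (Z : topologicalType) (J : Type) (C : cw_structure R Z J).

Definition cellof (z : Z) : J := projT1 (cid (cw_cover _ _ _ C z)).
Definition cellpt (z : Z) : 'rV[R]_(cw_dim C (cellof z)) :=
  projT1 (cid2 (projT2 (cid (cw_cover _ _ _ C z)))).

Lemma cellpt_odisk z : odisk R _ (cellpt z).
Proof. rewrite /cellpt; case: cid2 => //= w ow _; exact: ow. Qed.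

Lemma cellpt_eq z : cw_char C _ (cellpt z) = z.
Proof. rewrite /cellpt; case: cid2 => //= w _ ew; exact: ew. Qed.

Lemma ocell_cellof z : ocell C (cellof z) z.
Proof. exists (cellpt z); [exact: cellpt_odisk | exact: cellpt_eq]. Qed.

Lemma cell_unique j z : ocell C j z -> j = cellof z.
Proof. move=> h; exact: (cw_disjoint _ _ _ C _ _ _ h (ocell_cellof z)). Qed.

Lemma ocell_char j w : odisk R _ w -> ocell C j (cw_char C j w).
Proof. by move=> ow; exists w. Qed.

Lemma cellof_char j w : odisk R _ w -> cellof (cw_char C j w) = j.
Proof. by move=> ow; symmetry; apply: cell_unique; exact: ocell_char. Qed.

Lemma cellof_le j w : disk R _ w -> cw_le C (cellof (cw_char C j w)) j.
Proof.
move=> /disk_cases [ow|sw].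
  by rewrite cellof_char //; exact: rt_refl.
apply: rt_step; exists (cw_char C j w); split; first exact: ocell_cellof.
by exists w.
Qed.

End Cells.

From mathcomp Require Import lra.
From Stdlib Require Import Relation_Operators List.
Unset Implicit Arguments.
Unset Strict Implicit.
Unset Printing Implicit Defensive.

Section Gen.
Context (R : realType) (X : topologicalType) (I : Type) (CX : cw_structure R X I)
  (F : cosheaf CX).

Record setup := Setup {
  sZ : topologicalType; sJ : Type; sC : cw_structure R sZ sJ;
  sh : sZ -> X; shs : sJ -> I }.
Arguments sh : clear implicits.
Arguments shs : clear implicits.

Definition sG (S : setup) := fun j : sJ S => cs_sp F (shs S j).
Definition spt (S : setup) := rpt (sC S) (sG S).
Definition srel (S : setup) : forall i j : sJ S, sG S j -> sG S i -> Prop :=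
  @pullback_rel R X I (sJ S) CX F (shs S).
Definition sreq (S : setup) := @requiv R _ _ (sC S) (sG S) (@srel S).
Definition scar (S : setup) := @rcarrier R _ _ (sC S) (sG S) (@srel S).
Definition svalid (S : setup) (p : spt S) := @rvalid R _ _ (sC S) (sG S) p.
Arguments svalid {S} p.

Definition pj S (p : spt S) : sJ S := projT1 p.
Arguments pj {S} p.
Definition pa S (p : spt S) : sG S (pj p) := (projT2 p).1.
Arguments pa {S} p.
Definition py S (p : spt S) : 'rV[R]_(cw_dim (sC S) (pj p)) := (projT2 p).2.
Arguments py {S} p.
Definition ppt S (p : spt S) : sZ S := cw_char (sC S) (pj p) (py p).
Arguments ppt {S} p.

Definition good (S : setup) :=
  [/\ injective (sh S),
      forall j w, odisk R _ w -> ocell CX (shs S j) (sh S (cw_char (sC S) j w)) &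
      forall j' j, cw_gen (sC S) j' j -> cw_le CX (shs S j') (shs S j)].

Lemma res_pi i j (P Q : cw_le CX i j) (a : cs_sp F j) : cs_res P a = cs_res Q a.
Proof. by rewrite (Prop_irrelevance P Q). Qed.

Lemma res_comp i j k (P : cw_le CX i j) (Q : cw_le CX j k) (a : cs_sp F k) :
  cs_res P (cs_res Q a) = cs_res (rt_trans _ _ _ _ _ P Q) a.
Proof. by rewrite (cs_res_comp (rt_trans _ _ _ _ _ P Q) P Q). Qed.

Lemma res_gen i j k (P : cw_le CX i j) (Q : cw_le CX j k) (T : cw_le CX i k) (a : cs_sp F k) :
  cs_res P (cs_res Q a) = cs_res T a.
Proof. by rewrite res_comp; apply: res_pi. Qed.

Lemma res_idE i (P : cw_le CX i i) (a : cs_sp F i) : cs_res P a = a.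
Proof. exact: cs_res_id. Qed.

Lemma le_refl_eq i j : i = j -> cw_le CX i j.
Proof. by move=> ->; exact: rt_refl. Qed.

Lemma le_trans i j k : cw_le CX i j -> cw_le CX j k -> cw_le CX i k.
Proof. exact: rt_trans. Qed.

Definition xsame (S T : setup) (p : spt S) (q : spt T) :=
  sh S (ppt p) = sh T (ppt q) /\
  forall k (P : cw_le CX k (shs S (pj p))) (Q : cw_le CX k (shs T (pj q))),
    ocell CX k (sh S (ppt p)) -> cs_res P (pa p) = cs_res Q (pa q).
Arguments xsame {S T} p q.

Section OneSetup.
Variable S : setup.
Hypothesis gS : good S.

Lemma good_inj : injective (sh S). Proof. by case: gS. Qed.
Lemma good_cell j w : odisk R _ w -> ocell CX (shs S j) (sh S (cw_char (sC S) j w)).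
Proof. by case: gS => _ h _; exact: h. Qed.
Lemma good_le j' j : cw_gen (sC S) j' j -> cw_le CX (shs S j') (shs S j).
Proof. by case: gS => _ _ h; exact: h. Qed.

Lemma good_le' j' j : cw_le (sC S) j' j -> cw_le CX (shs S j') (shs S j).
Proof.
elim=> [? ? /good_le //| ? | ? ? ? _ h1 _ h2]; first exact: rt_refl.
exact: le_trans h1 h2.
Qed.

Lemma shs_cellof z : shs S (cellof (sC S) z) = cellof CX (sh S z).
Proof.
apply: cell_unique.
have := good_cell (cellof (sC S) z) _ (cellpt_odisk (sC S) z).
by rewrite cellpt_eq.
Qed.

Lemma ptle (p : spt S) : svalid p -> cw_le CX (cellof CX (sh S (ppt p))) (shs S (pj p)).
Proof.
move=> vp; rewrite -shs_cellof; apply: good_le'; exact: cellof_le.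
Qed.

Lemma xsame_refl (p : spt S) : xsame p p.
Proof. by split => // k P Q _; apply: res_pi. Qed.

End OneSetup.

Lemma xsame_sym S T (p : spt S) (q : spt T) : xsame p q -> xsame q p.
Proof.
move=> [e h]; split => // k P Q; rewrite -e => oc; symmetry; exact: h.
Qed.

Lemma xsame_trans S T U (p : spt S) (q : spt T) (r : spt U) :
  good T -> svalid q -> xsame p q -> xsame q r -> xsame p r.
Proof.
move=> gT vq [e1 h1] [e2 h2]; split; first by rewrite e1.
move=> k P Q oc.
have ek : k = cellof CX (sh T (ppt q)) by apply: cell_unique; rewrite -e1.
have M : cw_le CX k (shs T (pj q)) by rewrite ek; exact: ptle.
rewrite (h1 k P M oc); apply: h2; by rewrite -e1.
Qed.


Lemma ptle' S (gS : good S) (p : spt S) : svalid p ->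
  cw_le CX (shs S (cellof (sC S) (ppt p))) (shs S (pj p)).
Proof. move=> vp; apply: (good_le' S gS); exact: cellof_le. Qed.

Lemma rgen_valid S (p q : spt S) : rgen (@srel S) p q -> svalid p /\ svalid q.
Proof. by case=> _ [dp [sq _]]; split => //; exact: sphere_disk. Qed.

Lemma rgen_same S (p q : spt S) : rgen (@srel S) p q -> xsame p q.
Proof.
case=> _ [_ [_ [e [Pr ea]]]]; split; first by rewrite /ppt /py /pj e.
move=> k P Q _; rewrite /pa ea; exact: res_gen.
Qed.

Lemma rst_same S (gS : good S) (p q : spt S) :
  clos_refl_sym_trans (spt S) (rgen (@srel S)) p q ->
  p = q \/ [/\ svalid p, svalid q & xsame p q].
Proof.
elim=> {p q}.
- move=> p q g; right; have [vp vq] := rgen_valid S p q g; split => //.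
  exact: rgen_same.
- by move=> p; left.
- move=> p q _ [->|[vp vq h]]; [by left | right; split => //; exact: xsame_sym].
- move=> p q r _ [->|[vp vq h1]] _ [<-|[vq' vr h2]].
  + by left.
  + by right.
  + by right.
  + right; split => //; exact: (xsame_trans _ _ _ p q r gS vq h1 h2).
Qed.

Lemma req_same S (gS : good S) (p q : spt S) : sreq S p q ->
  [/\ svalid p, svalid q & xsame p q].
Proof.
case=> vp [vq h]; have [e|//] := rst_same S gS p q h.
by subst q; split => //; exact: xsame_refl.
Qed.

Lemma sreq_sym S (p q : spt S) : sreq S p q -> sreq S q p.
Proof. by case=> vp [vq h]; split => //; split => //; exact: rst_sym. Qed.

Lemma sreq_trans S (p q r : spt S) : sreq S p q -> sreq S q r -> sreq S p r.
Proof.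
case=> vp [vq h1] [_ [vr h2]]; split => //; split => //; exact: rst_trans h1 h2.
Qed.

Lemma sreq_refl S (p : spt S) : svalid p -> sreq S p p.
Proof. by move=> vp; split => //; split => //; exact: rst_refl. Qed.

Lemma canon_req S (gS : good S) (p : spt S) k (b : sG S k) w :
  svalid p -> odisk R _ w -> cw_char (sC S) k w = ppt p ->
  forall P : cw_le CX (shs S k) (shs S (pj p)), b = cs_res P (pa p) ->
  sreq S p (existT _ k (b, w)).
Proof.
case: p => j [a y] /=; rewrite /svalid /rvalid /ppt /pj /py /pa /= => vy ow e P eb.
have vq : svalid (existT (fun j => (sG S j * 'rV[R]_(cw_dim (sC S) j))%type) k (b, w)).
  exact: odisk_disk.
have [oy|sy] := disk_cases vy.
  have ekj : k = j.
    apply: (cw_disjoint _ _ _ (sC S) _ _ (cw_char (sC S) j y)); last by exists y.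
    by exists w.
  subst k.
  have ewy : w = y by apply: (cw_char_inj _ _ _ (sC S) j w y ow oy e).
  subst w; rewrite eb res_idE; exact: sreq_refl.
apply: sreq_sym; split => //; split => //; apply: rst_step.
split; last split; [|exact: odisk_disk|split => //; split => //; by exists P].
apply: t_step; exists (cw_char (sC S) j y); split; first by rewrite -e; exists w.
by exists y.
Qed.

Lemma canon_eq S (gS : good S) k k' (b : sG S k) (b' : sG S k') w w' :
  odisk R _ w -> odisk R _ w' ->
  @xsame S S (existT _ k (b, w)) (existT _ k' (b', w')) ->
  existT (fun j => (sG S j * 'rV[R]_(cw_dim (sC S) j))%type) k (b, w) =
  existT _ k' (b', w').
Proof.
move=> ow ow' [e h]; rewrite /ppt /pj /py /= in e h.
have e1 := good_inj S gS _ _ e.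
have ekk : k = k'.
  apply: (cw_disjoint _ _ _ (sC S) _ _ (cw_char (sC S) k w)); first by exists w.
  by rewrite e1; exists w'.
subst k'.
have eww : w = w' by apply: (cw_char_inj _ _ _ (sC S) k w w' ow ow' e1).
subst w'.
have := h (shs S k) (rt_refl _ _ _) (rt_refl _ _ _) (good_cell S gS k w ow).
rewrite /pa /= !res_idE => ->; by [].
Qed.

Lemma same_req S (gS : good S) (p q : spt S) : svalid p -> svalid q -> xsame p q ->
  sreq S p q.
Proof.
move=> vp vq h.
pose cp := existT (fun j => (sG S j * 'rV[R]_(cw_dim (sC S) j))%type)
  (cellof (sC S) (ppt p)) (cs_res (ptle' S gS p vp) (pa p), cellpt (sC S) (ppt p)).
pose cq := existT (fun j => (sG S j * 'rV[R]_(cw_dim (sC S) j))%type)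
  (cellof (sC S) (ppt q)) (cs_res (ptle' S gS q vq) (pa q), cellpt (sC S) (ppt q)).
have rp : sreq S p cp.
  apply: (canon_req S gS p _ _ _ vp (cellpt_odisk _ _) (cellpt_eq _ _) (ptle' S gS p vp)).
  by [].
have rq : sreq S q cq.
  apply: (canon_req S gS q _ _ _ vq (cellpt_odisk _ _) (cellpt_eq _ _) (ptle' S gS q vq)).
  by [].
have [_ vcp hp] := req_same S gS p cp rp.
have [_ vcq hq] := req_same S gS q cq rq.
have hc : xsame cp cq.
  apply: (xsame_trans _ _ _ cp q cq gS vq) => //.
  apply: (xsame_trans _ _ _ cp p q gS vp) => //; exact: xsame_sym.
have ecc : cp = cq by apply: (canon_eq S gS) => //; exact: cellpt_odisk.
apply: (sreq_trans S p cp q rp); rewrite ecc; exact: sreq_sym.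
Qed.

Definition cls S (p : spt S) (vp : svalid p) : scar S :=
  exist _ (sreq S p) (ex_intro _ p (conj vp erefl)).

Lemma scar_eq S (A B : scar S) : proj1_sig A = proj1_sig B -> A = B.
Proof.
case: A => a Ha; case: B => b Hb /= e; subst b.
by rewrite (Prop_irrelevance Ha Hb).
Qed.

Lemma cls_eq S (p q : spt S) vp vq : sreq S p q -> cls S p vp = cls S q vq.
Proof.
move=> h; apply: scar_eq => /=; apply: funext => r; apply: propext; split.
  by move=> h'; apply: sreq_trans (sreq_sym _ _ _ h) h'.
by move=> h'; apply: sreq_trans h h'.
Qed.

Definition rep S (A : scar S) : spt S := projT1 (cid (proj2_sig A)).

Lemma rep_valid S (A : scar S) : svalid (rep S A).
Proof. exact: (proj1 (projT2 (cid (proj2_sig A)))). Qed.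

Lemma rep_cls S (A : scar S) : A = cls S (rep S A) (rep_valid S A).
Proof.
apply: scar_eq => /=; exact: (proj2 (projT2 (cid (proj2_sig A)))).
Qed.

Lemma mem_cls S (A : scar S) (q : spt S) (hq : proj1_sig A q) :
  exists vq, A = cls S q vq.
Proof.
have : sreq S (rep S A) q by rewrite (rep_cls S A) in hq.
case=> _ [vq _] ; exists vq.
rewrite (rep_cls S A); apply: cls_eq; by rewrite (rep_cls S A) in hq.
Qed.

Lemma cls_mem S (p : spt S) vp : proj1_sig (cls S p vp) p.
Proof. exact: sreq_refl. Qed.

Section Transfer.
Variables S T : setup.
Hypotheses (gS : good S) (gT : good T).
Variable m : sZ S -> sZ T.
Hypothesis hm : forall z, sh T (m z) = sh S z.

Lemma tle (p : spt S) (vp : svalid p) :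
  cw_le CX (shs T (cellof (sC T) (m (ppt p)))) (shs S (pj p)).
Proof. rewrite (shs_cellof T gT) hm; exact: ptle. Qed.

Definition tpt (p : spt S) (vp : svalid p) : spt T :=
  existT (fun j => (sG T j * 'rV[R]_(cw_dim (sC T) j))%type)
    (cellof (sC T) (m (ppt p)))
    (cs_res (tle p vp) (pa p), cellpt (sC T) (m (ppt p))).

Lemma tpt_valid p vp : svalid (tpt p vp).
Proof. exact: odisk_disk (cellpt_odisk _ _). Qed.

Lemma tpt_same p vp : xsame p (tpt p vp).
Proof.
split; first by rewrite /ppt /tpt /= cellpt_eq hm.
move=> k P Q _; rewrite /pa /tpt /=; symmetry; exact: res_gen.
Qed.

Definition transfer (A : scar S) : scar T :=
  cls T (tpt (rep S A) (rep_valid S A)) (tpt_valid _ _).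

Lemma transfer_cls p vp q vq : xsame p q -> transfer (cls S p vp) = cls T q vq.
Proof.
move=> h; rewrite /transfer.
set r := rep S (cls S p vp); set vr := rep_valid S (cls S p vp).
have erp : sreq S r p.
  have := cls_mem S p vp; rewrite (rep_cls S (cls S p vp)) => /= hh; exact: hh.
have [_ _ hrp] := req_same S gS r p erp.
apply: cls_eq; apply: (same_req T gT) => //; first exact: tpt_valid.
apply: (xsame_trans _ _ _ _ p q gS vp) => //.
apply: (xsame_trans _ _ _ _ r p gS vr) => //.
exact: xsame_sym (tpt_same r vr).
Qed.


Lemma piece_T k (b : sG T k) w (dw : disk R _ w) (U : set (scar T)) :
  (exists B : scar T, U B /\ proj1_sig B (existT _ k (b, w))) <->
  U (cls T (existT (fun j => (sG T j * 'rV[R]_(cw_dim (sC T) j))%type) k (b, w)) dw).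
Proof.
split.
- case=> B [UB hB]; have [vq eB] := mem_cls T B _ hB.
  by rewrite eB in UB; rewrite (Prop_irrelevance dw vq).
- move=> h; exists (cls T (existT (fun j => (sG T j * 'rV[R]_(cw_dim (sC T) j))%type) k (b, w)) dw).
  split => //; exact: cls_mem.
Qed.

Lemma xs_jk j (a : sG S j) (y : 'rV[R]_(cw_dim (sC S) j)) k
    (P : cw_le CX (shs T k) (shs S j)) (w : 'rV[R]_(cw_dim (sC T) k)) :
  cw_char (sC T) k w = m (cw_char (sC S) j y) ->
  xsame (existT (fun j => (sG S j * 'rV[R]_(cw_dim (sC S) j))%type) j (a, y))
        (existT (fun j => (sG T j * 'rV[R]_(cw_dim (sC T) j))%type) k (cs_res P a, w)).
Proof.
move=> e; split; first by rewrite /ppt /py /pj /= e hm.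
move=> k' P' Q _; rewrite /pa /=; symmetry; exact: res_gen.
Qed.

Lemma transfer_piece (U : set (scar T)) (oU : ropen U) (j : sJ S) (L : list (sJ T))
  (hL : forall k, List.In k L -> cw_le CX (shs T k) (shs S j))
  (hcov : forall y : 'rV[R]_(cw_dim (sC S) j), disk R _ y ->
     exists2 k, List.In k L & exists w, disk R _ w /\
       cw_char (sC T) k w = m (cw_char (sC S) j y))
  (hmc : {within disk R (cw_dim (sC S) j), continuous (m \o cw_char (sC S) j)}) :
  open_in_piece (C := sC S) (G := sG S) (i := j)
    [set ax | disk R _ ax.2 /\ exists A, U (transfer A) /\ proj1_sig A (existT _ j ax)].
Proof.
have hZ := cw_hausdorff _ _ _ (sC T).
pose Ok k := projT1 (cid (oU k)).
have oOk k : open (Ok k) by rewrite /Ok; case: (cid (oU k)) => O [].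
have eOk k (b : sG T k) w (dw : disk R _ w) :
    Ok k (b, w) <-> U (cls T (existT (fun j => (sG T j * 'rV[R]_(cw_dim (sC T) j))%type) k (b, w)) dw).
  rewrite -piece_T /Ok; case: (cid (oU k)) => O [_ eO] /=.
  move/seteqP: eO => [s1 s2]; split.
  - by move=> Ob; have [_ hh] := s2 (b, w) (conj Ob dw).
  - by move=> h; have [] := s1 (b, w) (conj dw h).
pose Eqs k := [set p : 'rV[R]_(cw_dim (sC S) j) * 'rV[R]_(cw_dim (sC T) k) |
   disk R _ p.1 /\ disk R _ p.2 /\ (m \o cw_char (sC S) j) p.1 = cw_char (sC T) k p.2].
have cEqs k : closed (Eqs k).
  apply: (closed_eq_within hZ (@disk_closed R _) (@disk_closed R _) hmc).
  exact: cw_char_cont.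
pose Ck k (P : cw_le CX (shs T k) (shs S j)) :=
  ((fun t : (sG S j * 'rV[R]_(cw_dim (sC S) j)) * 'rV[R]_(cw_dim (sC T) k) =>
      (t.1.2, t.2)) @^-1` Eqs k) `&`
  ((fun t : (sG S j * 'rV[R]_(cw_dim (sC S) j)) * 'rV[R]_(cw_dim (sC T) k) =>
      (cs_res P t.1.1, t.2)) @^-1` (~` Ok k)).
have cCk k P : closed (Ck k P).
  apply: closedI.
    apply: (proj1 (continuous_closedP _) _ _ (cEqs k)).
    apply: pair_cont; last exact: snd_cont.
    exact: cont12.
  apply: (proj1 (continuous_closedP _) _ _ (open_closedC (oOk k))).
  apply: pair_cont; last exact: snd_cont.
  apply: cont11; exact: cs_res_cont.
pose Bad k := match pselect (cw_le CX (shs T k) (shs S j)) with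
  | left P => fst @` Ck k P | right _ => set0 end.
have cBad k : closed (Bad k).
  rewrite /Bad; case: pselect => [P|_]; last exact: closed0.
  apply: (tube_closed (@disk_compact R _) (cCk k P)).
  by move=> [[a y] w] /= [[_ [dw _]] _].
pose BadU := foldr (fun k acc => Bad k `|` acc) set0 L.
exists (~` BadU); split.
  rewrite openC; exact: closed_foldU.
apply/seteqP; split => -[a y] /=.
- move=> [dy [A [UA hA]]]; split => //.
  have [vA eA] := mem_cls S A _ hA.
  move=> hB; have [k kL] := @foldU_in _ _ Bad L (a, y) hB; rewrite /Bad; case: (pselect (cw_le CX (shs T k) (shs S j))) => [P|//].
  move=> [[[a' y'] w]] /= [[_ [dw ew]] nO] [ea ey]; subst a' y'.
  apply: nO; apply/(eOk k _ w dw).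
  by move: UA; rewrite eA (transfer_cls _ vA
    (existT (fun j => (sG T j * 'rV[R]_(cw_dim (sC T) j))%type) k (cs_res P a, w))
    dw (xs_jk j a y k P w (esym ew))).
- move=> [nB dy]; split => //.
  exists (cls S (existT (fun j => (sG S j * 'rV[R]_(cw_dim (sC S) j))%type) j (a, y)) dy).
  split; last exact: cls_mem.
  apply: contrapT => nU.
  have [k kL [w [dw ew]]] := hcov y dy.
  have P := hL k kL.
  apply: nB; apply: (@in_foldU _ _ Bad L k (a, y) kL).
  rewrite /Bad; case: (pselect (cw_le CX (shs T k) (shs S j))) => [P'|]; last by [].
  exists ((a, y), w) => //; split.
    by split => //; split => //.
  move=> /= Ob; apply: nU.
  have := (proj1 (eOk k _ w dw)) Ob.
  by rewrite (transfer_cls (existT (fun j => (sG S j * 'rV[R]_(cw_dim (sC S) j))%type) j (a, y)) dy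
    (existT (fun j => (sG T j * 'rV[R]_(cw_dim (sC T) j))%type) k (cs_res P' a, w))
    dw (xs_jk j a y k P' w ew)).
Qed.

End Transfer.

End Gen.

From mathcomp Require Import lra.
From Stdlib Require Import Relation_Operators List.
Unset Implicit Arguments.

Section Fin.
Context (R : realType) (Z : topologicalType) (J : Type) (C : cw_structure R Z J).

Lemma odisk0 n : odisk R n 0.
Proof. rewrite /odisk /= /sqnorm big1 ?ltr01 // => k _; by rewrite mxE expr0n. Qed.

Lemma cw_compact_finite (K : set Z) : compact K ->
  exists L : list J, forall z, K z -> List.In (cellof C z) L.
Proof.
move=> cK.
have hZ := cw_hausdorff _ _ _ C.
pose pick (j : J) : Z := match pselect (exists z, K z /\ ocell C j z) with
  | left e => projT1 (cid e) | right _ => cw_char C j 0 end.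
have pick_cell j : ocell C j (pick j).
  rewrite /pick; case: pselect => [e|_]; last by exists 0 => //; exact: odisk0.
  by case: (cid e) => z [].
have pick_K j : (exists z, K z /\ ocell C j z) -> K (pick j).
  rewrite /pick; case: pselect => [e|//] _; by case: (cid e) => z [].
pose S := [set z | K z /\ exists j, z = pick j].
have pick_inj j l : pick j = pick l -> j = l.
  move=> e; apply: (cw_disjoint _ _ _ C _ _ (pick j) (pick_cell j)); rewrite e.
  exact: pick_cell.
have sub_closed : forall A, A `<=` S -> closed A.
  move=> A AS; apply/cw_weak => i.
  have [s [_ hs]] := cw_closure_finite _ _ _ C i.
  pose B l := disk R _ `&` cw_char C i @^-1` (A `&` [set pick l]).
  have E : disk R _ `&` cw_char C i @^-1` A = foldr (fun l acc => B l `|` acc) set0 (i :: s).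
    apply/seteqP; split => w.
    - move=> [dw Aw]; have [_ [l0 el0]] := AS _ Aw.
      have oc : ocell C l0 (cw_char C i w) by rewrite el0; exact: pick_cell.
      have [ow|sw] := disk_cases dw.
        have eli : l0 = i by apply: (cw_disjoint _ _ _ C _ _ _ oc); exists w.
        subst l0; apply: (in_foldU (B := B) (j := i)); first by left.
        by split => //; split.
      have [l ls ocl] := hs (cw_char C i w) (ex_intro2 _ _ w sw erefl).
      have ell : l0 = l by apply: (cw_disjoint _ _ _ C _ _ _ oc ocl).
      subst l0; apply: (in_foldU (B := B) (j := l)); first by right.
      by split => //; split.
    - move=> /(@foldU_in _ _ B) [l _ [dw [Aw _]]]; by split.
  suff h : closed (foldr (fun l acc => B l `|` acc) set0 (i :: s)).
    move: h; rewrite -E => h; exact: h.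
  apply: closed_foldU => l.
  rewrite /B; apply: closed_pre_within.
  - exact: disk_closed.
  - exact: cw_char_cont.
  have [Al|nAl] := pselect (A (pick l)).
    have -> : A `&` [set pick l] = [set pick l].
      by apply/seteqP; split => [z [] //|z ->]; split.
    exact: (@accessible_closed_set1 Z (@hausdorff_accessible Z hZ) (pick l)).
  have -> : A `&` [set pick l] = set0.
    by apply/seteqP; split => [z [Az ez]|//]; apply: nAl; rewrite -ez.
  exact: closed0.
pose Bl (L : list J) := S `\` [set z | exists2 l, List.In l L & z = pick l].
have [[L hL]|nL] := pselect (exists L : list J, Bl L = set0).
  exists L => z Kz.
  have Kp : K (pick (cellof C z)) by apply: pick_K; exists z; split => //; exact: ocell_cellof.
  have : ~ Bl L (pick (cellof C z)) by rewrite hL.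
  move=> nB; apply: contrapT => nIn; apply: nB; split; first by split => //; eexists.
  move=> [l lL e]; apply: nIn; by rewrite (pick_inj _ _ e).
have nz : forall L, Bl L !=set0.
  move=> L; apply: contrapT => h; apply: nL; exists L.
  by apply/seteqP; split => // z Bz; apply: h; exists z.
pose G := filter_from [set: list J] Bl.
have FG : Filter G.
  apply: filter_from_filter; first by exists nil.
  move=> L1 L2 _ _; exists (L1 ++ L2) => // z [Sz nz']; split; split => //.
  - by move=> [l lL e]; apply: nz'; exists l => //; apply: in_or_app; left.
  - by move=> [l lL e]; apply: nz'; exists l => //; apply: in_or_app; right.
have PG : ProperFilter G by apply: filter_from_proper => L _; exact: nz.
have GK : G K by exists nil => // z [[]].
have [p [Kp cp]] := cK G PG GK.
pose W := ~` (S `\` [set pick (cellof C p)]).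
have oW : open W.
  rewrite openC; apply: sub_closed => z []; by [].
have Wp : W p.
  move=> [[_ [l el]] ne]; apply: ne.
  have -> : cellof C p = l; last by [].
  symmetry; apply: cell_unique; rewrite el; exact: pick_cell.
have GB : G (Bl (cellof C p :: nil)) by exists (cellof C p :: nil).
have [z [[Sz nz'] Wz]] := cp _ _ GB (open_nbhs_nbhs (conj oW Wp)).
exfalso; apply: Wz; split => // ez; apply: nz'; exists (cellof C p); by [left|].
Qed.

End Fin.

From mathcomp Require Import lra.
From Stdlib Require Import Relation_Operators List.
Unset Implicit Arguments.

Section Main.
Context (R : realType) (X Y : topologicalType) (I J : Type)
  (CX : cw_structure R X I) (CY : cw_structure R Y J)
  (f : Y -> X) (fs : J -> I) (F : cosheaf CX)
  (g : X -> Y) (fK : cancel f g) (gK : cancel g f)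
  (cf : continuous f) (cg : continuous g)
  (hcell : forall j, f @` ocell CY j `<=` ocell CX (fs j)).

Lemma fcell j w : odisk R _ w -> ocell CX (fs j) (f (cw_char CY j w)).
Proof. move=> ow; apply: hcell; exists (cw_char CY j w) => //; by exists w. Qed.

Lemma fphi_cont j : {within disk R (cw_dim CY j), continuous (f \o cw_char CY j)}.
Proof.
apply: within_continuous_comp; last exact: cw_char_cont.
by move=> x _; exact: cf.
Qed.

Lemma CLS j y : disk R _ y ->
  exists2 z, disk R _ z & cw_char CX (fs j) z = f (cw_char CY j y).
Proof.
move=> dy.
pose K := cw_char CX (fs j) @` disk R (cw_dim CX (fs j)).
have cK : closed K.
  apply: compact_closed; first exact: (cw_hausdorff _ _ _ CX).
  apply: continuous_compact; last exact: disk_compact.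
  exact: cw_char_cont.
have cQ := closed_pre_within (@disk_closed R _) (fphi_cont j) cK.
suff : (disk R _ `&` (f \o cw_char CY j) @^-1` K) y.
  by case=> _ [z dz e]; exists z.
apply: cQ => B nB.
have [w [ow Bw]] := disk_near dy nB.
exists w; split => //; split; first exact: odisk_disk.
have [z oz e] := fcell j w ow.
by exists z => //; exact: odisk_disk.
Qed.

Definition SY := Setup R X I Y J CY f fs.
Definition SX := Setup R X I X I CX (fun x => x) (fun i => i).

Lemma goodY : good R X I CX SY.
Proof.
split.
- exact: can_inj fK.
- move=> j w ow; exact: fcell.
- move=> j' j [x [ocx [s ss ex]]] /=.
  have [z dz ez] := CLS j s (sphere_disk ss).
  have oc' : ocell CX (fs j') (f x) by apply: hcell; exists x.
  have [oz|sz] := disk_cases dz.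
    apply: le_refl_eq.
    apply: (cw_disjoint _ _ _ CX _ _ (f x) oc').
    by exists z => //; rewrite ez ex.
  apply: rt_step; exists (f x); split => //.
  by exists z => //; rewrite ez ex.
Qed.

Lemma goodX : good R X I CX SX.
Proof.
split => //=.
- by move=> j w ow; exists w.
- by move=> j' j h; apply: rt_step.
Qed.

Lemma hmYX : forall z, sh R X I SX (f z) = sh R X I SY z.
Proof. by []. Qed.

Lemma hmXY : forall z, sh R X I SY (g z) = sh R X I SX z.
Proof. by move=> z /=; rewrite gK. Qed.

Definition tYX := transfer R X I CX F SY SX goodY goodX f hmYX.
Definition tXY := transfer R X I CX F SX SY goodX goodY g hmXY.


Lemma transfer_cancel (S T : setup R X I) gS gT m hm m' hm' :
  cancel (transfer R X I CX F S T gS gT m hm) (transfer R X I CX F T S gT gS m' hm').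
Proof.
move=> A.
have := rep_cls R X I CX F S A.
move: (rep R X I CX F S A) (rep_valid R X I CX F S A) => p vp eA.
rewrite {1}eA.
rewrite (transfer_cls R X I CX F S T gS gT m hm p vp _
   (tpt_valid R X I CX F S T gS gT m hm p vp) (tpt_same R X I CX F S T gS gT m hm p vp)).
rewrite (transfer_cls R X I CX F T S gT gS m' hm' _
   (tpt_valid R X I CX F S T gS gT m hm p vp) p vp
   (xsame_sym R X I CX F _ _ _ _ (tpt_same R X I CX F S T gS gT m hm p vp))).
by rewrite -eA.
Qed.

Lemma canYX : cancel tYX tXY.
Proof.
exact: (transfer_cancel SY SX goodY goodX f hmYX g hmXY).
Qed.

Lemma canXY : cancel tXY tYX.
Proof.
exact: (transfer_cancel SX SY goodX goodY g hmXY f hmYX).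
Qed.

Lemma openYX (U : set (scar R X I CX F SX)) :
  @ropen R X I CX (sG R X I CX F SX) (srel R X I CX F SX) U ->
  @ropen R Y J CY (sG R X I CX F SY) (srel R X I CX F SY) (tYX @^-1` U).
Proof.
move=> oU j.
have h := transfer_piece R X I CX F SY SX goodY goodX f hmYX U oU j [:: fs j].
apply: h.
- by move=> k [<-|[]]; exact: rt_refl.
- move=> y dy; exists (fs j); first by left.
  have [z dz e] := CLS j y dy; by exists z.
- exact: fphi_cont.
Qed.

Lemma openXY (V : set (scar R X I CX F SY)) :
  @ropen R Y J CY (sG R X I CX F SY) (srel R X I CX F SY) V ->
  @ropen R X I CX (sG R X I CX F SX) (srel R X I CX F SX) (tXY @^-1` V).
Proof.
move=> oV j.
pose K := g @` (cw_char CX j @` disk R (cw_dim CX j)).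
have cK : compact K.
  apply: continuous_compact.
    by apply: continuous_subspaceT => x; exact: cg.
  apply: continuous_compact; last exact: disk_compact.
  exact: cw_char_cont.
have [L0 hL0] := cw_compact_finite R Y J CY K cK.
pose L := List.filter (fun k => `[< cw_le CX (fs k) j >]) L0.
have h := transfer_piece R X I CX F SX SY goodX goodY g hmXY V oV j L.
apply: h.
- move=> k /filter_In [_ /asboolP]; by [].
- move=> y dy.
  pose z := g (cw_char CX j y).
  have Kz : K z by exists (cw_char CX j y) => //; exists y.
  exists (cellof CY z).
    apply/filter_In; split; first exact: hL0.
    apply/asboolP.
    have := shs_cellof R X I CX SY goodY z; rewrite /= => ->.
    rewrite /z gK; exact: cellof_le.
  exists (cellpt CY z); split; first exact: odisk_disk (cellpt_odisk _ _).
  exact: cellpt_eq.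
- apply: within_continuous_comp; last exact: cw_char_cont.
  by move=> x _; exact: cg.
Qed.

End Main.

Theorem mainTheorem16 (R : realType) (X Y : topologicalType) (I J : Type)
    (CX : cw_structure R X I) (CY : cw_structure R Y J)
    (f : Y -> X) (fs : J -> I)
    (hf : cellular_refinement CX CY f fs)
    (F : cosheaf CX) :
  homeomorphic (pullback_realization CY F fs) (cosheaf_realization F).
Proof.
case: hf => [[g [fK [gK [cf cg]]]] hcell].
exists (tYX R X Y I J CX CY f fs F g fK cf hcell).
exists (tXY R X Y I J CX CY f fs F g fK gK cf hcell).
split; [|split; [|split]].
- exact: (canYX R X Y I J CX CY f fs F g fK gK cf hcell).
- exact: (canXY R X Y I J CX CY f fs F g fK gK cf hcell).
- move=> U oU; exact: (openYX R X Y I J CX CY f fs F g fK cf hcell U oU).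
- move=> U oU; exact: (openXY R X Y I J CX CY f fs F g fK gK cf cg hcell U oU).
Qed.
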